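(* Let $n\ge3$ and suppose $T=T_\lambda(r,m)$ acts linearly and inner faithfully on $\Bbbk\overline{Q}$, where $g$ acts either as a rotation ($g\cdot e_i=e_{i+d}$, $g\cdot a_i=\mu_ia_{i+d}$, $g\cdot a_i^*=\mu_i^*a^*_{i+d}$) or as a reflection ($g\cdot e_i=e_{n-(d+i)}$, $g\cdot a_i=\mu_ia^*_{n-(d+i+1)}$, $g\cdot a_i^*=\mu_i^*a_{n-(d+i+1)}$), with $0\le d\le n-1$ and $\mu_i,\mu_i^*\in\Bbbk^\times$. Then the action descends to an action on $\Pi_Q$ if and only if for all $i$ $$\mu_i\mu_i^*-\mu_{i+1}\mu_{i+1}^*=0$$ and $$a_i^*\sigma(a_i)+\sigma(a_i^* )(g\cdot a_i)-a_{i+1}\sigma(a_{i+1}^* )-\sigma(a_{i+1})(g\cdot a_{i+1}^* )=0 \quad\text{in }\Pi_Q.$$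
   Context: Let $\Bbbk$ be a field, $r>1$ and $m$ positive integers with $r\mid m$, and $\lambda\in\Bbbk$ a primitive $r$-th root of unity, with $r$ coprime to the characteristic of $\Bbbk$. The generalized Taft algebra $T=T_\lambda(r,m)$ is the Hopf algebra generated by $g,x$ with relations $gx=\lambda xg$, $g^m=1$, $x^r=0$, $\Delta(g)=g\otimes g$, $\Delta(x)=1\otimes x+x\otimes g$, $\varepsilon(g)=1,\varepsilon(x)=0$, $S(g)=g^{-1}$, $S(x)=-xg^{-1}$. An action of $T$ on an algebra $A$ is a $T$-module algebra structure; so $g$ acts by an algebra automorphism and $x\cdot(ab)=a(x\cdot b)+(x\cdot a)(g\cdot b)$. It is inner faithful if no nonzero Hopf ideal $I$ of $T$ satisfies $I\cdot A=0$. Vertex indices are taken modulo $n$. $\overline{Q}$ has vertices $0,\dots,n-1$ and arrows $a_i:i\to i+1$, $a_i^*:i+1\to i$; in $\Bbbk\overline{Q}$, $e_i$ is the trivial path at $i$, $s(a),t(a)$ source and target, and $pq$ is the concatenation ($p$ then $q$) if $t(p)=s(q)$, else $0$. $\Pi_Q=\Bbbk\overline{Q}/(\Omega)$, $(\Omega)$ the ideal generated by $a_i^*a_i-a_{i+1}a_{i+1}^*$. The action descends to $\Pi_Q$ if $(\Omega)$ is stable under $g$ and $x$. A linear action: $g$ acts by a path-length-preserving automorphism ($g\cdot e_i=e_{g\cdot i}$) and $x$ maps vertices into the span of vertices and arrows into the span of vertices and arrows. Then there are scalars $\gamma_i$ with $x\cdot e_i=\gamma_ie_i-\gamma_i\lambda^{-1}e_{g\cdot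 i}$; the quiver-Taft map $\sigma$ is the linear map on the span of vertices and arrows with $\sigma(e_i)=0$ and $\sigma(a)=x\cdot a-\gamma_{t(a)}a+\gamma_{s(a)}\lambda^{-1}(g\cdot a)$ for arrows $a$. *)

(* Defs.v *)
From HB Require Import structures.
From mathcomp Require Import all_boot all_order all_algebra.
Set Implicit Arguments. Unset Strict Implicit. Unset Printing Implicit Defensive.
Import GRing.Theory.
Local Open Scope ring_scope.

(* The path algebra k\overline{Q} of the double cyclic quiver on n vertices. *)
(* A path is encoded by its start vertex and the list of its steps: from the *)
(* current vertex u, the step [true] is the arrow a_u : u -> u+1 and the     *)
(* step [false] is the arrow a_{u-1}^* : u -> u-1 (these are exactly the two *)
(* arrows leaving u).  This is a bijection with the paths of \overline{Q}.   *)
(* Elements of k\overline{Q} are the finitely supported functions            *)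
(* path -> k (coefficient of each path); [pmul] is the convolution product,  *)
(* i.e. the bilinear extension of concatenation (p then q, 0 if t(p)<>s(q)).  *)
Section PathAlgebra.
Variables (k : fieldType) (n : nat).

Definition vert := 'Z_n.
Definition path := (vert * seq bool)%type.

Definition ptgt (p : path) : vert :=
  p.1 + (count id p.2)%:R - (count negb p.2)%:R.

Definition pel := path -> k.

Definition pzero : pel := fun _ => 0.
Definition padd (f h : pel) : pel := fun p => f p + h p.
Definition psub (f h : pel) : pel := fun p => f p - h p.
Definition pscale (c : k) (f : pel) : pel := fun p => c * f p.
Definition pmul (f h : pel) : pel := fun p =>
  \sum_(j < (size p.2).+1)
     f (p.1, take j p.2) * h (ptgt (p.1, take j p.2), drop j p.2).
Definition pone : pel := fun p => if nilp p.2 then 1 else 0.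
Definition pbasis (q : path) : pel := fun p => if p == q then 1 else 0.

Definition vtx (i : vert) : pel := pbasis (i, [::]).
Definition arr (i : vert) : pel := pbasis (i, [:: true]).
Definition arrs (i : vert) : pel := pbasis (i + 1, [:: false]).

Definition arrow := (vert * bool)%type.
Definition arrp (a : arrow) : pel := if a.2 then arr a.1 else arrs a.1.
Definition asrc (a : arrow) : vert := if a.2 then a.1 else a.1 + 1.
Definition atgt (a : arrow) : vert := if a.2 then a.1 + 1 else a.1.

Definition fin_supp (f : pel) : Prop :=
  exists N : nat, forall p : path, (N <= size p.2)%N -> f p = 0.

Definition deg_le (N : nat) (f : pel) : Prop :=
  forall p : path, (N < size p.2)%N -> f p = 0.

Definition homog (l : nat) (f : pel) : Prop :=
  forall p : path, size p.2 != l -> f p = 0.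

Definition Omega (i : vert) : pel :=
  psub (pmul (arrs i) (arr i)) (pmul (arr (i + 1)) (arrs (i + 1))).

(* membership in the two-sided ideal (Omega) of k\overline{Q};
   "f = 0 in Pi_Q" means in_Omega f *)
Definition in_Omega (f : pel) : Prop :=
  exists (N : nat) (u : 'I_N -> pel) (j : 'I_N -> vert) (v : 'I_N -> pel),
    (forall l, fin_supp (u l) /\ fin_supp (v l)) /\
    f = (fun p => \sum_(l < N) pmul (pmul (u l) (Omega (j l))) (v l) p).

Definition lin_endo (F : pel -> pel) : Prop :=
  (forall f, fin_supp f -> fin_supp (F f)) /\
  (forall f h, fin_supp f -> fin_supp h -> F (padd f h) = padd (F f) (F h)) /\
  (forall c f, fin_supp f -> F (pscale c f) = pscale c (F f)).

End PathAlgebra.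

(* The generalized Taft algebra T = T_lam(r,m), modelled on its PBW basis    *)
(* g^a x^b (a < m, b < r): an element is its coefficient function.           *)
(* Multiplication: g^a1 x^b1 . g^a2 x^b2 = lam^(-b1 a2) g^(a1+a2) x^(b1+b2)   *)
(* (using x g = lam^-1 g x, g^m = 1, x^r = 0).  Delta, eps are the algebra    *)
(* maps with Delta g = g(x)g, Delta x = 1(x)x + x(x)g, eps g = 1, eps x = 0;   *)
(* S is the anti-algebra map with S g = g^-1, S x = - x g^-1.                 *)
Section Taft.
Variables (k : fieldType) (r m : nat) (lam : k).

Definition Tel := 'I_m -> 'I_r -> k.

(* the basis element g^a x^b (which is 0 when b >= r, and g^m = 1) *)
Definition tE (a b : nat) : Tel :=
  fun i j => if ((i : nat) == (a %% m)%N) && ((j : nat) == b) then 1 else 0.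

Definition tzero : Tel := fun _ _ => 0.
Definition tadd (s t : Tel) : Tel := fun i j => s i j + t i j.
Definition tscale (c : k) (t : Tel) : Tel := fun i j => c * t i j.

Definition tmul (s t : Tel) : Tel := fun i j =>
  \sum_(a1 < m) \sum_(b1 < r) \sum_(a2 < m) \sum_(b2 < r)
     s a1 b1 * t a2 b2 * lam ^- (b1 * a2) * tE (a1 + a2) (b1 + b2) i j.

Definition tpow (s : Tel) (e : nat) : Tel := iter e (tmul s) (tE 0 0).

Definition TT := 'I_m -> 'I_r -> 'I_m -> 'I_r -> k.

Definition ttens (u v : Tel) : TT := fun a b c d => u a b * v c d.
Definition ttadd (U V : TT) : TT := fun a b c d => U a b c d + V a b c d.

Definition ttmul (U V : TT) : TT := fun a b c d =>
  \sum_(a1 < m) \sum_(b1 < r) \sum_(c1 < m) \sum_(d1 < r)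
  \sum_(a2 < m) \sum_(b2 < r) \sum_(c2 < m) \sum_(d2 < r)
     U a1 b1 c1 d1 * V a2 b2 c2 d2 *
     ttens (tmul (tE a1 b1) (tE a2 b2)) (tmul (tE c1 d1) (tE c2 d2)) a b c d.

Definition ttpow (U : TT) (e : nat) : TT :=
  iter e (ttmul U) (ttens (tE 0 0) (tE 0 0)).

Definition Delta_g : TT := ttens (tE 1 0) (tE 1 0).
Definition Delta_x : TT :=
  ttadd (ttens (tE 0 0) (tE 0 1)) (ttens (tE 0 1) (tE 1 0)).

Definition tDelta (t : Tel) : TT := fun a b c d =>
  \sum_(i < m) \sum_(j < r)
     t i j * ttmul (ttpow Delta_g i) (ttpow Delta_x j) a b c d.

Definition teps (t : Tel) : k :=
  \sum_(i < m) \sum_(j < r) t i j * ((1 : k) ^+ i * (0 : k) ^+ j).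

Definition tginv : Tel := tE (m - 1) 0.
Definition tS (t : Tel) : Tel := fun a b =>
  \sum_(i < m) \sum_(j < r)
     t i j * tmul (tpow (tscale (-1) (tmul (tE 0 1) tginv)) j) (tpow tginv i) a b.

Definition hopf_ideal (I : Tel -> Prop) : Prop :=
  I tzero /\
  (forall s t, I s -> I t -> I (tadd s t)) /\
  (forall c t, I t -> I (tscale c t)) /\
  (forall s t, I t -> I (tmul s t) /\ I (tmul t s)) /\
  (forall t, I t -> teps t = 0) /\
  (forall t, I t -> exists (N : nat) (u v : 'I_N -> Tel),
       (forall l, I (u l) \/ I (v l)) /\
       tDelta t = (fun a b c d => \sum_(l < N) ttens (u l) (v l) a b c d)) /\
  (forall t, I t -> I (tS t)).

End Taft.

Section Action.
Variables (k : fieldType) (n r m : nat) (lam : k).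
Variables (G X : pel k n -> pel k n).

Definition taft_module_algebra : Prop :=
  lin_endo G /\ lin_endo X /\
  (forall f, fin_supp f -> G (X f) = pscale lam (X (G f))) /\
  (forall f, fin_supp f -> iter m G f = f) /\
  (forall f, fin_supp f -> iter r X f = @pzero k n) /\
  (forall f h, fin_supp f -> fin_supp h -> G (pmul f h) = pmul (G f) (G h)) /\
  G (@pone k n) = @pone k n /\
  (forall f h, fin_supp f -> fin_supp h ->
     X (pmul f h) = padd (pmul f (X h)) (pmul (X f) (G h))) /\
  X (@pone k n) = @pzero k n.

Definition tact (t : Tel k r m) (f : pel k n) : pel k n := fun p =>
  \sum_(a < m) \sum_(b < r) t a b * iter a G (iter b X f) p.

Definition inner_faithful : Prop :=
  ~ exists I : Tel k r m -> Prop,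
      hopf_ideal lam I /\ (exists t, I t /\ t <> @tzero k r m) /\
      (forall t f, I t -> fin_supp f -> tact t f = @pzero k n).

Definition linear_action : Prop :=
  (forall (l : nat) f, homog l f -> homog l (G f)) /\
  (forall i, deg_le 0 (X (vtx k i))) /\
  (forall a : arrow n, deg_le 1 (X (arrp k a))).

Definition rotation_action (d : nat) (mu mus : 'Z_n -> k) : Prop :=
  forall i : 'Z_n,
    G (vtx k i) = vtx k (i + d%:R) /\
    G (arr k i) = pscale (mu i) (arr k (i + d%:R)) /\
    G (arrs k i) = pscale (mus i) (arrs k (i + d%:R)).

(* g acts as a reflection: n - (d+i) is -(d+i) in 'Z_n *)
Definition reflection_action (d : nat) (mu mus : 'Z_n -> k) : Prop :=
  forall i : 'Z_n,
    G (vtx k i) = vtx k (- (d%:R + i)) /\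
    G (arr k i) = pscale (mu i) (arrs k (- (d%:R + i + 1))) /\
    G (arrs k i) = pscale (mus i) (arr k (- (d%:R + i + 1))).

Definition descends : Prop :=
  forall f, in_Omega f -> in_Omega (G f) /\ in_Omega (X f).

Definition qsigma (gam : 'Z_n -> k) (a : arrow n) : pel k n :=
  padd (psub (X (arrp k a)) (pscale (gam (atgt a)) (arrp k a)))
       (pscale (gam (asrc a) * lam^-1) (G (arrp k a))).

End Action.

(* Main.v *)
Require Import Defs.
From HB Require Import structures.
From mathcomp Require Import all_boot all_order all_algebra ring zify.
From Stdlib Require Import FunctionalExtensionality.
Set Implicit Arguments. Unset Strict Implicit. Unset Printing Implicit Defensive.
Import GRing.Theory.
Local Open Scope ring_scope.

Lemma tri (R : nmodType) (N : nat) (F : nat -> nat -> R) :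
  \sum_(i < N.+1) \sum_(j < (N - i).+1) F i (i + j)%N =
  \sum_(j < N.+1) \sum_(i < j.+1) F i j.
Proof.
transitivity (\sum_(0 <= j < N.+1) \sum_(0 <= i < N.+1) (if (i <= j)%N then F i j else 0)); last first.
  rewrite big_mkord; apply: eq_bigr => j _.
  rewrite -(big_mkord xpredT (fun i => F i j)) (big_nat_widen 0 j.+1 N.+1) ?ltn_ord //.
  by rewrite big_mkcondr /=; apply: eq_big_nat => i _; rewrite ltnS.
rewrite exchange_big_nat big_mkord; apply: eq_bigr => i _.
symmetry.
rewrite (big_cat_nat (n := i)) //= ?(ltnW (ltn_ord i)) //.
rewrite [X in X + _]big1_seq ?add0r; last first.
  move=> j /andP[_]; rewrite mem_index_iota => /andP[_ ji]; by rewrite leqNgt ji.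
rewrite -{1}(add0n i) big_addn subSn; last by rewrite -ltnS ltn_ord.
rewrite big_mkord; apply: eq_bigr => j _; by rewrite leq_addl addnC.
Qed.


Section P.
Variables (k : fieldType) (n : nat).
Implicit Types (f g h u v : pel k n) (x : vert n) (s : seq bool).

Lemma ptgt_nil x : ptgt (x, [::]) = x.
Proof. by rewrite /ptgt /= addr0 subr0. Qed.

Lemma ptgt_cat x a b : ptgt (ptgt (x, a), b) = ptgt (x, a ++ b).
Proof. rewrite /ptgt /= !count_cat !natrD; ring. Qed.

Lemma pmulA f g h : pmul f (pmul g h) = pmul (pmul f g) h.
Proof.
apply: functional_extensionality => -[x s]; rewrite /pmul /=.
set N := size s.
pose F i j := f (x, take i s) * g (ptgt (x, take i s), take (j - i) (drop i s))
              * h (ptgt (x, take j s), drop j s).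
transitivity (\sum_(i < N.+1) \sum_(j < (N - i).+1) F i (i + j)%N).
  apply: eq_bigr => i _; rewrite mulr_sumr size_drop; apply: eq_bigr => j _.
  rewrite /F addKn ptgt_cat -takeD drop_drop addnC mulrA //.
rewrite tri; apply: eq_bigr => j _; rewrite mulr_suml.
have jN : (j <= N)%N by rewrite -ltnS.
rewrite size_takel //; apply: eq_bigr => i _.
have ij : (i <= j)%N by rewrite -ltnS.
by rewrite /F take_takel // take_drop subnK.
Qed.

Lemma pmulDr f g h : pmul f (padd g h) = padd (pmul f g) (pmul f h).
Proof. apply: functional_extensionality => p; rewrite /pmul /padd -big_split /=; apply: eq_bigr => j _; ring. Qed.
Lemma pmulDl f g h : pmul (padd f g) h = padd (pmul f h) (pmul g h).
Proof. apply: functional_extensionality => p; rewrite /pmul /padd -big_split /=; apply: eq_bigr => j _; ring. Qed.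
Lemma pmulBr f g h : pmul f (psub g h) = psub (pmul f g) (pmul f h).
Proof. apply: functional_extensionality => p; rewrite /pmul /psub -sumrB /=; apply: eq_bigr => j _; ring. Qed.
Lemma pmulBl f g h : pmul (psub f g) h = psub (pmul f h) (pmul g h).
Proof. apply: functional_extensionality => p; rewrite /pmul /psub -sumrB /=; apply: eq_bigr => j _; ring. Qed.
Lemma pmulZr c f g : pmul f (pscale c g) = pscale c (pmul f g).
Proof. apply: functional_extensionality => p; rewrite /pmul /pscale mulr_sumr; apply: eq_bigr => j _; ring. Qed.
Lemma pmulZl c f g : pmul (pscale c f) g = pscale c (pmul f g).
Proof. apply: functional_extensionality => p; rewrite /pmul /pscale mulr_sumr; apply: eq_bigr => j _; ring. Qed.
Lemma pmul0r f : pmul f (@pzero k n) = @pzero k n.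
Proof. apply: functional_extensionality => p; rewrite /pmul /pzero big1 // => j _; ring. Qed.
Lemma pmul0l f : pmul (@pzero k n) f = @pzero k n.
Proof. apply: functional_extensionality => p; rewrite /pmul /pzero big1 // => j _; ring. Qed.

Lemma pmul_sumr (T : Type) (w : pel k n) (F : T -> pel k n) (r : seq T) :
  pmul w (fun p => \sum_(t <- r) F t p) = (fun p => \sum_(t <- r) pmul w (F t) p).
Proof.
apply: functional_extensionality => p; rewrite /pmul exchange_big /=.
by apply: eq_bigr => j _; rewrite mulr_sumr.
Qed.
Lemma pmul_suml (T : Type) (w : pel k n) (F : T -> pel k n) (r : seq T) :
  pmul (fun p => \sum_(t <- r) F t p) w = (fun p => \sum_(t <- r) pmul (F t) w p).
Proof.
apply: functional_extensionality => p; rewrite /pmul exchange_big /=.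
by apply: eq_bigr => j _; rewrite mulr_suml.
Qed.

Lemma pmul_nil f g x : pmul f g (x, [::]) = f (x, [::]) * g (x, [::]).
Proof. by rewrite /pmul /= big_ord_recl big_ord0 addr0 /= ptgt_nil. Qed.
Lemma pmul_1 f g x b : pmul f g (x, [:: b]) =
  f (x, [::]) * g (x, [:: b]) + f (x, [:: b]) * g (ptgt (x, [:: b]), [::]).
Proof. by rewrite /pmul /= !big_ord_recl big_ord0 addr0 /= ptgt_nil. Qed.
Lemma pmul_2 f g x b0 b1 : pmul f g (x, [:: b0; b1]) =
  f (x, [::]) * g (x, [:: b0; b1]) + f (x, [:: b0]) * g (ptgt (x, [:: b0]), [:: b1])
  + f (x, [:: b0; b1]) * g (ptgt (x, [:: b0; b1]), [::]).
Proof. by rewrite /pmul /= !big_ord_recl big_ord0 addr0 /= ptgt_nil addrA. Qed.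

Lemma take_bump_nonnil s (j : 'I_(size s)) : take (bump 0 j) s != [::].
Proof.
rewrite -size_eq0 size_take; case: ifP => _; first by rewrite /bump.
by rewrite -lt0n (leq_ltn_trans (leq0n j) (ltn_ord j)).
Qed.

Lemma pmul_vtxr f w p : pmul f (vtx k w) p = f p * (ptgt p == w)%:R.
Proof.
case: p => x s; rewrite /pmul /= big_ord_recr /= take_size drop_size.
rewrite big1 ?add0r; last first.
  move=> j _; rewrite /vtx /pbasis xpair_eqE.
  have : drop j s != [::] by rewrite -size_eq0 size_drop subn_eq0 -ltnNge ltn_ord.
  by move/negbTE => ->; rewrite andbF mulr0.
by rewrite /vtx /pbasis xpair_eqE eqxx andbT; case: (_ == _).
Qed.
Lemma pmul_vtxl f w p : pmul (vtx k w) f p = (p.1 == w)%:R * f p.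
Proof.
case: p => x s; rewrite /pmul /= big_ord_recl /= take0 drop0 ptgt_nil.
rewrite big1 ?addr0; last first.
  move=> j _; rewrite /vtx /pbasis xpair_eqE.
  by rewrite (negbTE (take_bump_nonnil j)) andbF mul0r.
by rewrite /vtx /pbasis xpair_eqE eqxx andbT; case: (_ == _).
Qed.

Lemma pmul1l f : pmul (@pone k n) f = f.
Proof.
apply: functional_extensionality => -[x s]; rewrite /pmul /= big_ord_recl /= take0 drop0 ptgt_nil.
rewrite big1 ?addr0 /pone /= ?mul1r //.
move=> j _; have := take_bump_nonnil j; rewrite /nilp size_eq0.
by move/negbTE => ->; rewrite mul0r.
Qed.
Lemma pmul1r f : pmul f (@pone k n) = f.
Proof.
apply: functional_extensionality => -[x s]; rewrite /pmul /= big_ord_recr /= take_size drop_size.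
rewrite big1 ?add0r /pone /= ?mulr1 //.
move=> j _; have : ~~ nilp (drop j s).
  by rewrite /nilp size_drop subn_eq0 -ltnNge ltn_ord.
by move/negbTE => ->; rewrite mulr0.
Qed.
End P.


Section I.
Variables (k : fieldType) (n : nat).
Implicit Types (f g h u v : pel k n) (x : vert n) (s : seq bool).
Notation fs := (@fin_supp k n).

Lemma fs0 : fs (@pzero k n). Proof. by exists 0%N. Qed.
Lemma fsD f g : fs f -> fs g -> fs (padd f g).
Proof. move=> [N1 H1] [N2 H2]; exists (maxn N1 N2) => p hp; rewrite /padd H1 ?H2 ?addr0 //; lia. Qed.
Lemma fsZ c f : fs f -> fs (pscale c f).
Proof. move=> [N1 H1]; exists N1 => p hp; by rewrite /pscale H1 ?mulr0. Qed.
Lemma fsB f g : fs f -> fs g -> fs (psub f g).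
Proof. move=> [N1 H1] [N2 H2]; exists (maxn N1 N2) => p hp; rewrite /psub H1 ?H2 ?subr0 //; lia. Qed.
Lemma fsM f g : fs f -> fs g -> fs (pmul f g).
Proof.
move=> [N1 H1] [N2 H2]; exists (N1 + N2)%N => -[x s] /= hp; rewrite /pmul big1 // => j _ /=.
have js : (j <= size s)%N by rewrite -ltnS.
move: (nat_of_ord j) js => jj js.
case: (leqP N1 jj) => hj.
  by rewrite H1 ?mul0r //= size_takel.
by rewrite H2 ?mulr0 //= size_drop; lia.
Qed.
Lemma fsP q : fs (pbasis k q).
Proof.
exists (size q.2).+1 => p hp; rewrite /pbasis; case: eqP => // epq.
by move: hp; rewrite epq ltnn.
Qed.
Lemma fs1 : fs (@pone k n).
Proof. exists 1%N => -[x [|b s]] //=. Qed.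
Lemma fsOmega i : fs (Omega k i).
Proof. rewrite /Omega /arr /arrs; apply: fsB; apply: fsM; apply: fsP. Qed.

Definition trip := (pel k n * vert n * pel k n)%type.
Fixpoint allfs (r : seq trip) : Prop :=
  match r with [::] => True | t :: r' => (fs t.1.1 /\ fs t.2) /\ allfs r' end.
Definition term (t : trip) : pel k n := pmul (pmul t.1.1 (Omega k t.1.2)) t.2.
Definition sumt (r : seq trip) : pel k n := fun p => \sum_(t <- r) term t p.
Definition Om f := exists r, allfs r /\ f = sumt r.

Lemma fs_term t : fs t.1.1 -> fs t.2 -> fs (term t).
Proof. by move=> h1 h2; apply: fsM => //; apply: fsM => //; apply: fsOmega. Qed.

Lemma fs_sumt r : allfs r -> fs (sumt r).
Proof.
elim: r => [|t r IH] /=.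
  by move=> _; exists 0%N => p _; rewrite /sumt big_nil.
move=> [[h1 h2] hr]; have [N HN] := fs_term h1 h2; have [M HM] := IH hr.
exists (maxn N M) => p hp; rewrite /sumt big_cons HN; last by lia.
by rewrite add0r; have := HM p; rewrite /sumt; apply; lia.
Qed.

Lemma sumt_cons t r : sumt (t :: r) = padd (term t) (sumt r).
Proof. by apply: functional_extensionality => p; rewrite /sumt /padd big_cons. Qed.
Lemma sumt_nil : sumt [::] = @pzero k n.
Proof. by apply: functional_extensionality => p; rewrite /sumt big_nil. Qed.
Lemma sumt_cat r1 r2 : sumt (r1 ++ r2) = padd (sumt r1) (sumt r2).
Proof. by apply: functional_extensionality => p; rewrite /sumt /padd big_cat. Qed.

Lemma allfs_cat r1 r2 : allfs r1 -> allfs r2 -> allfs (r1 ++ r2).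
Proof. by elim: r1 => [|t r IH] //= [h1 h2] h3; split => //; apply: IH. Qed.
Lemma allfs_map (F : trip -> trip) r :
  (forall t, fs t.1.1 -> fs t.2 -> fs (F t).1.1 /\ fs (F t).2) -> allfs r -> allfs (map F r).
Proof. move=> HF; elim: r => [|t r IH] //= [[h1 h2] h3]; split; [exact: HF | exact: IH]. Qed.

Lemma Om0 : Om (@pzero k n).
Proof. by exists [::]; rewrite sumt_nil. Qed.
Lemma OmD f g : Om f -> Om g -> Om (padd f g).
Proof. move=> [r1 [h1 ->]] [r2 [h2 ->]]; exists (r1 ++ r2); split; [exact: allfs_cat | by rewrite sumt_cat]. Qed.
Lemma OmZ c f : Om f -> Om (pscale c f).
Proof.
move=> [r [hr ->]]; exists (map (fun t => (pscale c t.1.1, t.1.2, t.2)) r); split.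
  by apply: (allfs_map _ hr) => t h1 h2 /=; split => //; apply: fsZ.
apply: functional_extensionality => p; rewrite /sumt /pscale big_map mulr_sumr.
by apply: eq_bigr => t _; rewrite /term /= !pmulZl.
Qed.
Lemma OmB f g : Om f -> Om g -> Om (psub f g).
Proof.
move=> hf hg; have -> : psub f g = padd f (pscale (-1) g).
  by apply: functional_extensionality => p; rewrite /psub /padd /pscale mulN1r.
by apply: OmD => //; apply: OmZ.
Qed.
Lemma OmL w f : fs w -> Om f -> Om (pmul w f).
Proof.
move=> hw [r [hr ->]]; exists (map (fun t => (pmul w t.1.1, t.1.2, t.2)) r); split.
  by apply: (allfs_map _ hr) => t h1 h2 /=; split => //; apply: fsM.
rewrite /sumt pmul_sumr; apply: functional_extensionality => p; rewrite big_map.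
by apply: eq_bigr => t _; rewrite /term /= !pmulA.
Qed.
Lemma OmR w f : fs w -> Om f -> Om (pmul f w).
Proof.
move=> hw [r [hr ->]]; exists (map (fun t => (t.1.1, t.1.2, pmul t.2 w)) r); split.
  by apply: (allfs_map _ hr) => t h1 h2 /=; split => //; apply: fsM.
rewrite /sumt pmul_suml; apply: functional_extensionality => p; rewrite big_map.
by apply: eq_bigr => t _; rewrite /term /= !pmulA.
Qed.
Lemma Om_term t : fs t.1.1 -> fs t.2 -> Om (term t).
Proof.
move=> h1 h2; exists [:: t]; split => //.
by apply: functional_extensionality => p; rewrite /sumt big_seq1.
Qed.
Lemma OmOmega i : Om (Omega k i).
Proof.
have := @Om_term (@pone k n, i, @pone k n) fs1 fs1; rewrite /term /= pmul1l pmul1r //.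
Qed.

Lemma lin_zero F : lin_endo F -> F (@pzero k n) = @pzero k n.
Proof.
move=> [h1 [h2 h3]]; have E : @pzero k n = pscale 0 (@pzero k n).
  by apply: functional_extensionality => p; rewrite /pscale mul0r.
rewrite {1}E h3; last exact: fs0.
apply: functional_extensionality => p; by rewrite /pscale mul0r.
Qed.
Lemma lin_sub F f g : lin_endo F -> fs f -> fs g -> F (psub f g) = psub (F f) (F g).
Proof.
move=> [h1 [h2 h3]] hf hg; have E : forall a b : pel k n, psub a b = padd a (pscale (-1) b).
  by move=> a b; apply: functional_extensionality => p; rewrite /psub /padd /pscale mulN1r.
by rewrite !E h2 ?h3 //; apply: fsZ.
Qed.

Lemma Om_lin F : lin_endo F ->
  (forall t, fs t.1.1 -> fs t.2 -> Om (F (term t))) -> forall f, Om f -> Om (F f).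
Proof.
move=> hF ht f [r [hr ->]]; elim: r hr => [|t r IH] /=.
  by move=> _; rewrite sumt_nil lin_zero //; apply: Om0.
move=> [[h1 h2] hr]; rewrite sumt_cons; have [_ [hD _]] := hF.
by rewrite hD; [apply: OmD; [exact: ht | exact: IH] | exact: fs_term | exact: fs_sumt].
Qed.

Lemma allfs_nth r l : allfs r -> fs (nth (@pzero k n, 0, @pzero k n) r l).1.1 /\
                                 fs (nth (@pzero k n, 0, @pzero k n) r l).2.
Proof.
elim: r l => [|t r IH] [|l] //=; try by split; apply: fs0.
  by case.
by case=> _; apply: IH.
Qed.

Lemma Om_in f : Om f <-> in_Omega f.
Proof.
split.
  move=> [r [hr ->]]; set d := (@pzero k n, 0 : vert n, @pzero k n).
  exists (size r), (fun l => (nth d r l).1.1), (fun l => (nth d r l).1.2), (fun l => (nth d r l).2).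
  split; first by move=> l; apply: allfs_nth.
  apply: functional_extensionality => p; rewrite /sumt (big_nth d) big_mkord //.
move=> [N [u [j [v [hl ->]]]]].
exists (map (fun l => (u l, j l, v l)) (index_enum 'I_N)); split.
  elim: (index_enum 'I_N) => [|a r IH] //=; split => //; exact: hl.
by apply: functional_extensionality => p; rewrite /sumt big_map.
Qed.
End I.


Section D.
Variables (k : fieldType) (n : nat).
Implicit Types (f g h u v : pel k n) (x w : vert n) (s : seq bool).

Lemma ptgtF x : ptgt (x, [:: false]) = x - 1.
Proof. by rewrite /ptgt /= addr0. Qed.
Lemma ptgtT x : ptgt (x, [:: true]) = x + 1.
Proof. by rewrite /ptgt /= subr0. Qed.
Lemma ptgtFT x : ptgt (x, [:: false; true]) = x.
Proof. by rewrite /ptgt /= addrK. Qed.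
Lemma ptgtTF x : ptgt (x, [:: true; false]) = x.
Proof. by rewrite /ptgt /= addrK. Qed.

Lemma enc (b : bool) s : ([::] == b :: s) = false. Proof. by []. Qed.
Lemma ecn (b : bool) s : (b :: s == [::]) = false. Proof. by []. Qed.
Lemma ecc (b c : bool) s t : (b :: s == c :: t) = (b == c) && (s == t). Proof. by []. Qed.
Lemma enn : ([::] == [::] :> seq bool) = true. Proof. by []. Qed.
Definition seqE := (enc, ecn, ecc, enn).

Lemma Omega_nil j x : Omega k j (x, [::]) = 0.
Proof. by rewrite /Omega /psub !pmul_nil /arr /arrs /pbasis !xpair_eqE /= !andbF !mul0r subr0. Qed.
Lemma Omega_1 j x b : Omega k j (x, [:: b]) = 0.
Proof.
rewrite /Omega /psub !pmul_1 /arr /arrs /pbasis !xpair_eqE /= !andbF !mul0r !mulr0 !add0r.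
by rewrite oppr0.
Qed.
Lemma Omega_psi j w : Omega k j (w, [:: false; true]) + Omega k j (w, [:: true; false]) = 0.
Proof.
rewrite /Omega /psub !pmul_2 /arr /arrs /pbasis !xpair_eqE !seqE /= ?ptgtF ?ptgtT.
rewrite !andbF !andbT ?mul0r ?mulr0 ?add0r ?addr0 subr0.
case: eqP => [->|_]; last by rewrite !mul0r subrr.
by rewrite addrK !eqxx subrr.
Qed.

Definition psi w f := f (w, [:: false; true]) + f (w, [:: true; false]).

Lemma psi_term w t : psi w (term t) = 0.
Proof.
rewrite /psi /term !pmul_2 !pmul_nil !pmul_1 !Omega_nil !Omega_1 ptgtFT ptgtTF.
rewrite !mulr0 !mul0r !addr0 !add0r.
have := Omega_psi t.1.2 w; set a := Omega _ _ _; set b := Omega _ _ _ => hab.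
rewrite (_ : b = - a); first ring. by apply/eqP; rewrite -addr_eq0 addrC hab.
Qed.

Lemma psi_Om w f : Om f -> psi w f = 0.
Proof.
move=> [r [_ ->]]; rewrite /psi /sumt -big_split big1 // => t _ /=.
exact: psi_term.
Qed.
End D.


Section E.
Variables (k : fieldType) (n : nat).
Implicit Types (f g h u v : pel k n) (x w i j : vert n) (s : seq bool).
Notation fs := (@fin_supp k n).

Lemma pbasis_vr (q : Defs.path n) : pmul (pbasis k q) (vtx k (ptgt q)) = pbasis k q.
Proof.
apply: functional_extensionality => p; rewrite pmul_vtxr /pbasis.
by case: eqP => [->|_]; rewrite ?eqxx ?mulr1 ?mul0r.
Qed.
Lemma pbasis_vl (q : Defs.path n) : pmul (vtx k q.1) (pbasis k q) = pbasis k q.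
Proof.
apply: functional_extensionality => p; rewrite pmul_vtxl /pbasis.
by case: (p =P q) => [->|_]; rewrite ?eqxx ?mul1r ?mulr0.
Qed.
Lemma vtx_vtx x w : pmul (vtx k x) (vtx k w) = if w == x then vtx k x else @pzero k n.
Proof.
apply: functional_extensionality => p; rewrite pmul_vtxr.
case: (w =P x) => [->|ne]; rewrite /vtx /pbasis /pzero; case: (p =P (x,[::])) => [->|_];
  rewrite ?ptgt_nil ?eqxx ?mul1r ?mul0r //.
by move/eqP: ne; rewrite eq_sym => /negbTE ->.
Qed.

Lemma arrs_v i : pmul (arrs k i) (vtx k i) = arrs k i.
Proof. by have := pbasis_vr (i + 1, [:: false]); rewrite ptgtF addrK. Qed.
Lemma arr_v i : pmul (vtx k i) (arr k i) = arr k i.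
Proof. exact: (pbasis_vl (i, [:: true])). Qed.
Lemma arr_v2 i : pmul (arr k i) (vtx k (i + 1)) = arr k i.
Proof. by have := pbasis_vr (i, [:: true]); rewrite ptgtT. Qed.
Lemma arrs_v2 i : pmul (vtx k (i + 1)) (arrs k i) = arrs k i.
Proof. exact: (pbasis_vl (i + 1, [:: false])). Qed.

Lemma PP1 j w : pmul (arrs k j) (arr k j) (w, [:: false; true]) = (w == j + 1)%:R.
Proof.
rewrite !pmul_2 /arr /arrs /pbasis !xpair_eqE !seqE /= ?ptgtF ?ptgtT.
rewrite ?andbF ?andbT ?mul0r ?mulr0 ?add0r ?addr0.
by case: eqP => [->|_]; rewrite ?addrK ?eqxx ?mulr1 ?mul0r.
Qed.
Lemma PP2 j w : pmul (arrs k j) (arr k j) (w, [:: true; false]) = 0.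
Proof.
rewrite !pmul_2 /arr /arrs /pbasis !xpair_eqE !seqE /= ?ptgtF ?ptgtT.
by rewrite ?andbF ?andbT ?mul0r ?mulr0 ?add0r ?addr0.
Qed.
Lemma QQ1 j w : pmul (arr k j) (arrs k j) (w, [:: true; false]) = (w == j)%:R.
Proof.
rewrite !pmul_2 /arr /arrs /pbasis !xpair_eqE !seqE /= ?ptgtF ?ptgtT.
rewrite ?andbF ?andbT ?mul0r ?mulr0 ?add0r ?addr0.
by case: eqP => [->|_]; rewrite ?addrK ?eqxx ?mulr1 ?mul0r.
Qed.
Lemma QQ2 j w : pmul (arr k j) (arrs k j) (w, [:: false; true]) = 0.
Proof.
rewrite !pmul_2 /arr /arrs /pbasis !xpair_eqE !seqE /= ?ptgtF ?ptgtT.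
by rewrite ?andbF ?andbT ?mul0r ?mulr0 ?add0r ?addr0.
Qed.
End E.


Section F.
Variables (k : fieldType) (n r m : nat) (lam : k) (G X : pel k n -> pel k n) (gam : 'Z_n -> k).
Implicit Types (f g h u v : pel k n) (x w i j : vert n) (s : seq bool).
Notation fs := (@fin_supp k n).
Hypothesis HMA : taft_module_algebra r m lam G X.
Hypothesis Hvtx : forall i : 'Z_n,
     X (vtx k i) = psub (pscale (gam i) (vtx k i))
                        (pscale (gam i * lam^-1) (G (vtx k i))).
Hypothesis HGv : forall i, exists w, G (vtx k i) = vtx k w.

Lemma linG : lin_endo G. Proof. by case: HMA. Qed.
Lemma linX : lin_endo X. Proof. by case: HMA => _ []. Qed.
Lemma Gmul f g : fs f -> fs g -> G (pmul f g) = pmul (G f) (G g).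
Proof. by case: HMA => _ [_ [_ [_ [_ [H _]]]]]; apply: H. Qed.
Lemma Xmul f g : fs f -> fs g -> X (pmul f g) = padd (pmul f (X g)) (pmul (X f) (G g)).
Proof. by case: HMA => _ [_ [_ [_ [_ [_ [_ [H _]]]]]]]; apply: H. Qed.
Lemma fsG f : fs f -> fs (G f). Proof. by case: linG => H _; apply: H. Qed.
Lemma fsX f : fs f -> fs (X f). Proof. by case: linX => H _; apply: H. Qed.

Lemma Xa (a : arrow n) : X (arrp k a) = padd (qsigma lam G X gam a)
   (padd (pscale (gam (atgt a)) (arrp k a)) (pscale (- (gam (asrc a) * lam^-1)) (G (arrp k a)))).
Proof. apply: functional_extensionality => p; rewrite /qsigma /padd /psub /pscale; ring. Qed.

Lemma extra (v : vert n) f g : fs f -> fs g -> pmul f (vtx k v) = f -> pmul (vtx k v) g = g ->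
  pscale (gam v - gam v * lam^-1) (pmul f (G g)) = @pzero k n.
Proof.
move=> hf hg ef eg; have [w Hw] := HGv v.
have e2 : G g = pmul (vtx k w) (G g) by rewrite -{1}eg Gmul ?Hw //; apply: fsP.
rewrite e2 -{1}ef -pmulA [pmul (vtx k v) _]pmulA vtx_vtx.
case: (w =P v) => [ew|_]; last first.
  by rewrite pmul0l pmul0r; apply: functional_extensionality => p; rewrite /pscale /pzero mulr0.
subst w; set c := gam v - gam v * lam^-1.
have Xe : X (vtx k v) = pscale c (vtx k v).
  by rewrite Hvtx Hw; apply: functional_extensionality => p; rewrite /psub /pscale /c; ring.
have ee : pmul (vtx k v) (vtx k v) = vtx k v by rewrite vtx_vtx eqxx.
have := Xmul (fsP _ (v, [::])) (fsP _ (v, [::])).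
rewrite -/(vtx k v) ee Xe Hw pmulZr pmulZl ee => /(congr1 (fun F => F (v, [::]))).
rewrite /padd /pscale /vtx /pbasis eqxx mulr1 => /eqP.
rewrite -subr_eq0 (_ : c - (c + c) = - c); last by ring.
rewrite oppr_eq0 => /eqP ->.
by apply: functional_extensionality => p; rewrite /pscale /pzero mul0r.
Qed.

Definition Sig i := psub (psub (padd (pmul (arrs k i) (qsigma lam G X gam (i, true)))
                                  (pmul (qsigma lam G X gam (i, false)) (G (arr k i))))
                           (pmul (arr k (i + 1)) (qsigma lam G X gam (i + 1, false))))
                     (pmul (qsigma lam G X gam (i + 1, true)) (G (arrs k (i + 1)))).

Lemma fsa i : fs (arr k i). Proof. exact: fsP. Qed.
Lemma fss i : fs (arrs k i). Proof. exact: fsP. Qed.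

Lemma GOm i : G (Omega k i) =
  psub (pmul (G (arrs k i)) (G (arr k i))) (pmul (G (arr k (i + 1))) (G (arrs k (i + 1)))).
Proof.
rewrite /Omega (lin_sub linG); try by apply: fsM; apply: fsP.
by rewrite (Gmul (fss i) (fsa i)) (Gmul (fsa (i+1)) (fss (i+1))).
Qed.

Lemma core i : X (Omega k i) = padd (Sig i) (padd (pscale (gam (i + 1)) (Omega k i))
                                      (pscale (- (gam (i + 1) * lam^-1)) (G (Omega k i)))).
Proof.
rewrite GOm {1}/Omega (lin_sub linX (fsM (fss i) (fsa i)) (fsM (fsa (i+1)) (fss (i+1)))).
rewrite (Xmul (fss i) (fsa i)) (Xmul (fsa (i+1)) (fss (i+1))).
have XA j : X (arr k j) = padd (qsigma lam G X gam (j, true))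
   (padd (pscale (gam (j + 1)) (arr k j)) (pscale (- (gam j * lam^-1)) (G (arr k j)))) := Xa (j, true).
have XS j : X (arrs k j) = padd (qsigma lam G X gam (j, false))
   (padd (pscale (gam j) (arrs k j)) (pscale (- (gam (j + 1) * lam^-1)) (G (arrs k j)))) := Xa (j, false).
rewrite !XA !XS /Sig.
move: (qsigma lam G X gam (i, true)) (qsigma lam G X gam (i, false))
      (qsigma lam G X gam (i + 1, true)) (qsigma lam G X gam (i + 1, false)) => q1 q2 q3 q4.
rewrite !pmulDr !pmulDl !pmulZr !pmulZl.
have E1 := extra (fss i) (fsa i) (@arrs_v k n i) (@arr_v k n i).
have E2 := extra (fsa (i + 1)) (fss (i + 1)) (@arr_v2 k n (i + 1)) (@arrs_v2 k n (i + 1)).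
apply: functional_extensionality => p.
move: (congr1 (fun F => F p) E1) (congr1 (fun F => F p) E2).
rewrite /Sig /Omega /padd /psub /pscale /pzero /= => e1 e2.
apply/eqP; rewrite -subr_eq0; apply/eqP.
set c1 := gam i - gam i * lam^-1 in e1; set c2 := gam (i + 1 + 1) - gam (i + 1 + 1) * lam^-1 in e2.
set A := pmul (arrs k i) (G (arr k i)) p in e1.
set B := pmul (arr k (i + 1)) (G (arrs k (i + 1))) p in e2.
transitivity (c1 * A - c2 * B); last by rewrite e1 e2 subrr.
rewrite /c1 /c2 /A /B; ring.
Qed.
End F.


Section GG.
Variables (k : fieldType) (n r m : nat) (lam : k) (G X : pel k n -> pel k n) (d : nat).
Variables (mu mus : 'Z_n -> k).
Implicit Types (f g h u v : pel k n) (x w i j : vert n) (s : seq bool).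
Hypothesis HMA : taft_module_algebra r m lam G X.

Lemma rot_G i : rotation_action G d mu mus -> G (Omega k i) =
  psub (pscale (mus i * mu i) (pmul (arrs k (i + d%:R)) (arr k (i + d%:R))))
       (pscale (mu (i + 1) * mus (i + 1)) (pmul (arr k (i + d%:R + 1)) (arrs k (i + d%:R + 1)))).
Proof.
move=> R; rewrite (GOm HMA); have [_ [h1 h2]] := R i; have [_ [h3 h4]] := R (i + 1).
rewrite h1 h2 h3 h4 !pmulZl !pmulZr addrAC.
by apply: functional_extensionality => p; rewrite /psub /pscale; ring.
Qed.

Lemma ref_G i : reflection_action G d mu mus -> G (Omega k i) =
  psub (pscale (mus i * mu i) (pmul (arr k (- (d%:R + i + 1))) (arrs k (- (d%:R + i + 1)))))
       (pscale (mu (i + 1) * mus (i + 1)) (pmul (arrs k (- (d%:R + (i + 1) + 1))) (arr k (- (d%:R + (i + 1) + 1))))).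
Proof.
move=> R; rewrite (GOm HMA); have [_ [h1 h2]] := R i; have [_ [h3 h4]] := R (i + 1).
rewrite h1 h2 h3 h4 !pmulZl !pmulZr.
by apply: functional_extensionality => p; rewrite /psub /pscale; ring.
Qed.

Lemma cond_of i : (rotation_action G d mu mus \/ reflection_action G d mu mus) ->
  Om (G (Omega k i)) -> mu i * mus i - mu (i + 1) * mus (i + 1) = 0.
Proof.
case=> R.
  move/(psi_Om (i + d%:R + 1)); rewrite (rot_G i R) /psi /psub /pscale !PP1 !PP2 !QQ1 !QQ2 !eqxx.
  by rewrite /= => <-; ring.
move/(psi_Om (- (d%:R + i + 1))); rewrite (ref_G i R) /psi /psub /pscale !PP1 !PP2 !QQ1 !QQ2 !eqxx.
rewrite (_ : - (d%:R + (i + 1) + 1) + 1 = - (d%:R + i + 1)); last by ring.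
by rewrite eqxx /= => <-; ring.
Qed.

Lemma G_of i : (rotation_action G d mu mus \/ reflection_action G d mu mus) ->
  mu i * mus i - mu (i + 1) * mus (i + 1) = 0 -> Om (G (Omega k i)).
Proof.
move=> RR /eqP; rewrite subr_eq0 => /eqP hmu.
case: RR => R.
  rewrite (rot_G i R) -hmu (_ : psub _ _ = pscale (mus i * mu i) (Omega k (i + d%:R))).
    by apply: OmZ; apply: OmOmega.
  by apply: functional_extensionality => p; rewrite /Omega /psub /pscale; ring.
rewrite (ref_G i R) -hmu (_ : psub _ _ = pscale (- (mus i * mu i)) (Omega k (- (d%:R + (i + 1) + 1)))).
  by apply: OmZ; apply: OmOmega.
rewrite /Omega (_ : - (d%:R + (i + 1) + 1) + 1 = - (d%:R + i + 1)); last by ring.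
by apply: functional_extensionality => p; rewrite /psub /pscale; ring.
Qed.
End GG.

Unset Implicit Arguments. Set Strict Implicit. Set Printing Implicit Defensive.

Theorem lemma2p7 (k : fieldType) (n r m : nat) (lam : k) (d : nat)
  (mu mus gam : 'Z_n -> k) (G X : pel k n -> pel k n) :
  (3 <= n)%N -> (1 < r)%N -> (0 < m)%N -> (r %| m)%N ->
  r.-primitive_root lam ->
  (forall p : nat, p \in [pchar k] -> coprime p r) ->
  (d < n)%N ->
  (forall i, mu i != 0) -> (forall i, mus i != 0) ->
  taft_module_algebra r m lam G X ->
  linear_action G X ->
  (rotation_action G d mu mus \/ reflection_action G d mu mus) ->
  inner_faithful r m lam G X ->
  (forall i : 'Z_n,
     X (vtx k i) = psub (pscale (gam i) (vtx k i))
                        (pscale (gam i * lam^-1) (G (vtx k i)))) ->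
  descends G X <->
  ((forall i : 'Z_n, mu i * mus i - mu (i + 1) * mus (i + 1) = 0) /\
   (forall i : 'Z_n,
      in_Omega (psub (psub (padd (pmul (arrs k i) (qsigma lam G X gam (i, true)))
                                  (pmul (qsigma lam G X gam (i, false)) (G (arr k i))))
                           (pmul (arr k (i + 1)) (qsigma lam G X gam (i + 1, false))))
                     (pmul (qsigma lam G X gam (i + 1, true)) (G (arrs k (i + 1))))))).
Proof.
move=> _ _ _ _ _ _ _ _ _ HMA _ RR _ Hvtx.
have HGv : forall i, exists w, G (vtx k i) = vtx k w.
  by case: RR => R i; eexists; apply: (R i).1.
have core i := core HMA Hvtx HGv i.
split.
  move=> Hd.
  have OGX i : Om (G (Omega k i)) /\ Om (X (Omega k i)).
    by have [h1 h2] := Hd _ (proj1 (Om_in _) (OmOmega k i)); split; apply/Om_in.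
  split; first by move=> i; apply: (cond_of HMA RR); case: (OGX i).
  move=> i; apply/Om_in.
  change (Om (Sig lam G X gam i)).
  have -> : Sig lam G X gam i = psub (X (Omega k i)) (padd (pscale (gam (i + 1)) (Omega k i))
                                      (pscale (- (gam (i + 1) * lam^-1)) (G (Omega k i)))).
    rewrite core; apply: functional_extensionality => p; rewrite /psub /padd /pscale; ring.
  have [h1 h2] := OGX i.
  by apply: OmB => //; apply: OmD; apply: OmZ => //; apply: OmOmega.
move=> [Hmu HS].
have OG i : Om (G (Omega k i)) by apply: (G_of HMA RR).
have OX i : Om (X (Omega k i)).
  rewrite core; apply: OmD; first by apply/Om_in; apply: HS.
  by apply: OmD; apply: OmZ => //; apply: OmOmega.
move=> f /Om_in Hf; split; apply/Om_in.
  apply: (Om_lin (linG HMA)) Hf => t h1 h2.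
  rewrite /term (Gmul HMA) ?(Gmul HMA) //; last by apply: fsM => //; apply: fsOmega.
    by apply: OmR; [apply: (fsG HMA) | apply: OmL => //; apply: (fsG HMA)].
  by apply: fsOmega.
apply: (Om_lin (linX HMA)) Hf => t h1 h2.
rewrite /term (Xmul HMA) ?(Xmul HMA) //; last by apply: fsM => //; apply: fsOmega.
  rewrite pmulDl; apply: OmD.
    by apply: OmR; [apply: (fsX HMA) | apply: OmL => //; apply: OmOmega].
  apply: OmD; (apply: OmR; first by apply: (fsG HMA)).
    by apply: OmL.
  by apply: OmL; first by apply: (fsX HMA).
by apply: fsOmega.
Qed.
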